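(* For $d\ge2$, $V^{(1)}_{d-1}=\{v\in V_{d-1}:\alpha_{d-1}(v)=\mathrm{id}\}$ and $V^{(2)}_{d-1}=\{v\in V_{d-1}:\alpha_{0X^{d-2}}(v)=\alpha_{1X^{d-2}}(v)=\mathrm{id}\}$.
   Context: Let $X=\{0,1\}$, $G(d)$ the automorphism group of the finite binary rooted tree of words of length $\le d$; finite sections $g(wv)=g(w)g_w(v)$. $C_2=\{\mathrm{id},\sigma\}$ written additively; $\alpha(g)=\sigma$ if $g(0)=1$ and $\mathrm{id}$ otherwise; $\alpha_{(w)}(g)=\alpha(g_w)$; for finite $S$, $\alpha_S(g)=\sum_{w\in S}\alpha_{(w)}(g)$; $\alpha_k=\alpha_{X^k}$ with $X^k$ the words of length $k$; $xX^k=\{xw:w\in X^k\}$. $V_{d-1}=G(d)_{d-1}$ is the level-$(d-1)$ stabilizer of $G(d)$; $V^{(0)}_{d-1}=V_{d-1}$ and $V^{(i+1)}_{d-1}=[G(d),V^{(i)}_{d-1}]$. *)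

(* Defs.v *)
From HB Require Import structures.
From mathcomp Require Import all_boot all_fingroup.
Set Implicit Arguments. Unset Strict Implicit. Unset Printing Implicit Defensive.

(* Words over X = {0,1}, encoded as seq bool with 0 = false, 1 = true. *)

Fixpoint words (n : nat) : seq (seq bool) :=
  if n is n'.+1 then [::] :: [seq b :: w | b <- [:: false; true], w <- words n']
  else [:: [::]].

Definition lev (k : nat) : seq (seq bool) := [seq w <- words k | size w == k].

Definition xlev (x : bool) (k : nat) : seq (seq bool) := map (cons x) (lev k).

(* Vertices of the finite binary rooted tree of depth d. *)
Definition vert (d : nat) := seq_sub (words d).

Definition root (d : nat) : vert d := @SeqSub _ (words d) [::]
  (match d return [::] \in words d with 0 => mem_head _ _ | _.+1 => mem_head _ _ end).

Definition child (d : nat) (u v : vert d) : bool :=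
  [exists b : bool, val v == rcons (val u) b].

Definition G (d : nat) : {set {perm vert d}} :=
  [set g : {perm vert d} | (g (root d) == root d) &&
     [forall u, forall v, child (g u) (g v) == child u v]].

(* action of g on words (identity outside the tree) *)
Definition act (d : nat) (g : {perm vert d}) (s : seq bool) : seq bool :=
  match @insub _ (fun x => x \in words d) (vert d) s with
  | Some w => val (g w) | None => s end.

(* section g_w : g(wv) = g(w) g_w(v) *)
Definition section (d : nat) (g : {perm vert d}) (w : seq bool) : seq bool -> seq bool :=
  fun v => drop (size w) (act g (w ++ v)).

(* alpha(h) = sigma (true) iff h(0) = 1; C_2 = (bool, addb), id = false *)
Definition alpha (h : seq bool -> seq bool) : bool := h [:: false] == [:: true].

Definition alpha_w (d : nat) (w : seq bool) (g : {perm vert d}) : bool :=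
  alpha (section g w).

Definition alpha_S (d : nat) (S : seq (seq bool)) (g : {perm vert d}) : bool :=
  \big[addb/false]_(w <- S) alpha_w w g.

Definition Vlev (d : nat) : {set {perm vert d}} :=
  [set g in G d | [forall w : vert d, (size (val w) == d.-1) ==> (g w == w)]].

Definition Vder (d i : nat) : {set {perm vert d}} :=
  iter i (fun H => [~: G d, H]%g) (Vlev d).

(* Main.v *)
Require Import Defs.
From mathcomp Require Import all_boot all_fingroup.
Set Implicit Arguments. Unset Strict Implicit. Unset Printing Implicit Defensive.


Lemma mem_words d s : (s \in words d) = (size s <= d).
Proof.
elim: d s => [|d IH] [|b s] //=.
have inj (b' : bool) : injective (cons b') by move=> x y [].
rewrite inE /= cats0 mem_cat; case: b.
  rewrite (mem_map (inj true)) ltnS -IH; apply/orP/idP=> [[|]|] //; last by right.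
  by case/mapP=> x _.
rewrite (mem_map (inj false)) ltnS -IH; apply/orP/idP=> [[|]|] //; last by left.
by case/mapP=> x _.
Qed.

Lemma uniq_words d : uniq (words d).
Proof.
elim: d => [|d IH] //=.
have inj (b' : bool) : injective (cons b') by move=> x y [].
rewrite cats0 mem_cat cat_uniq !map_inj_uniq // IH /= andbT.
apply/andP; split.
  by apply/orP => [[|]] /mapP [x _].
by apply/hasPn => s /mapP [x _ ->]; apply/mapP => [[y _]].
Qed.

Lemma mem_lev k s : (s \in lev k) = (size s == k).
Proof. by rewrite mem_filter mem_words andb_idr // => /eqP ->. Qed.

Lemma uniq_lev k : uniq (lev k).
Proof. exact/filter_uniq/uniq_words. Qed.

Lemma mem_xlev b k s : (s \in xlev b k) = (size s == k.+1) && (head false s == b).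
Proof.
case: s => [|c s] /=.
  by apply/mapP => [[x _]].
apply/mapP/idP => [[x Hx [-> ->]]|/andP[Hs /eqP ->]].
  by rewrite eqSS -mem_lev Hx eqxx.
by exists s => //; rewrite mem_lev.
Qed.

Lemma uniq_xlev b k : uniq (xlev b k).
Proof. by rewrite map_inj_uniq ?uniq_lev // => x y [] . Qed.

Lemma perm_lev n : perm_eq (lev n.+1) (xlev false n ++ xlev true n).
Proof.
apply: uniq_perm; rewrite ?uniq_lev // ?cat_uniq ?uniq_xlev //=.
  rewrite andbT; apply/hasPn => s; rewrite /= !mem_xlev => /andP[_ /eqP ->]; by rewrite andbF.
move=> s; rewrite mem_cat !mem_xlev mem_lev.
by case: (size s == n.+1); case: (head false s).
Qed.


Fixpoint phi (P : seq bool -> bool) (x : seq bool) : seq bool :=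
  if x is c :: s then (c (+) P [::]) :: phi (fun u => P (c :: u)) s else [::].

Lemma size_phi P x : size (phi P x) = size x.
Proof. by elim: x P => [|c x IH] P //=; rewrite IH. Qed.

Lemma phi_rcons P u b : phi P (rcons u b) = rcons (phi P u) (b (+) P u).
Proof. by elim: u P => [|c u IH] P //=; rewrite IH. Qed.

Lemma phiK P : (forall u, P (phi P u) = P u) -> involutive (phi P).
Proof.
move=> HP; elim/last_ind => [|u b IH] //.
by rewrite !phi_rcons IH HP -addbA addbb addbF.
Qed.

Lemma nth_phi P x i : i < size x -> nth false (phi P x) i = nth false x i (+) P (take i x).
Proof.
elim: x P i => [|c x IH] P [|i] //= Hi.
by rewrite IH.
Qed.

Section Perm.
Variable d : nat.
Implicit Types g h : {perm vert d}.

Definition pfun P (x : vert d) : vert d := insubd x (phi P (val x)).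

Lemma val_pfun P x : val (pfun P x) = phi P (val x).
Proof. by rewrite val_insubd mem_words size_phi -mem_words (valP x). Qed.

Definition pm P (H : forall u, P (phi P u) = P u) : {perm vert d} :=
  perm (can_inj (fun x => val_inj (etrans (val_pfun P (pfun P x))
                 (etrans (congr1 (phi P) (val_pfun P x)) (phiK H (val x)))))).

Lemma pm_val P H x : val (@pm P H x) = phi P (val x).
Proof. by rewrite permE val_pfun. Qed.

Definition vx s : vert d := insubd (Defs.root d) s.
Lemma val_vx s : s \in words d -> val (vx s) = s.
Proof. by move=> Hs; rewrite val_insubd Hs. Qed.

Lemma act_val g (x : vert d) : Defs.act g (val x) = val (g x).
Proof. by rewrite /Defs.act valK. Qed.

Lemma act_out g s : s \notin words d -> Defs.act g s = s.
Proof. by move=> Hs; rewrite /Defs.act insubF //; apply/negbTE. Qed.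

Lemma act_in g s : s \in words d -> Defs.act g s = val (g (vx s)).
Proof. by move=> Hs; rewrite -act_val val_vx. Qed.

Lemma act_pm P H s : s \in words d -> Defs.act (@pm P H) s = phi P s.
Proof. by move=> Hs; rewrite act_in // pm_val val_vx. Qed.

Lemma actK g : cancel (Defs.act g) (Defs.act g^-1).
Proof.
move=> s; case: (boolP (s \in words d)) => Hs; last by rewrite !act_out.
by rewrite (act_in g Hs) act_val permK val_vx.
Qed.

Lemma actKV g : cancel (Defs.act g^-1) (Defs.act g).
Proof. by move=> s; have := actK g^-1 s; rewrite invgK. Qed.

Lemma act_eq g w y : (Defs.act g^-1 w == y) = (w == Defs.act g y).
Proof. by apply/eqP/eqP => [<-|->]; rewrite ?actKV ?actK. Qed.

Lemma act_inj g : injective (Defs.act g).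
Proof. exact: can_inj (actK g). Qed.

Lemma pm_in_G P H : @pm P H \in G d.
Proof.
rewrite inE; apply/andP; split.
  by apply/eqP/val_inj; rewrite pm_val.
apply/forallP => u; apply/forallP => v; apply/eqP.
rewrite /child !pm_val; apply/existsP/existsP => [[b /eqP Hb]|[b /eqP Hb]].
  exists (b (+) P (phi P (val u))); apply/eqP.
  by rewrite -(phiK H (val v)) Hb phi_rcons phiK.
by exists (b (+) P (val u)); rewrite Hb phi_rcons.
Qed.

Lemma G_group_set : group_set (G d).
Proof.
apply/group_setP; split.
  rewrite inE perm1 eqxx /=; apply/forallP => u; apply/forallP => v.
  by rewrite !perm1.
move=> g h; rewrite !inE => /andP[/eqP g1 /forallP gc] /andP[/eqP h1 /forallP hc].
rewrite permM g1 h1 eqxx /=; apply/forallP => u; apply/forallP => v.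
rewrite !permM; move/forallP: (hc (g u)) => /(_ (g v)) /eqP ->.
by move/forallP: (gc u) => /(_ v).
Qed.

Canonical G_group := Group G_group_set.

Lemma G1 g : g \in G d -> Defs.act g [::] = [::].
Proof.
rewrite inE => /andP[/eqP g1 _].
have -> : [::] = val (Defs.root d) by [].
by rewrite act_val g1.
Qed.

Lemma Gchild g u v : g \in G d -> child (g u) (g v) = child u v.
Proof. by rewrite inE => /andP[_ /forallP /(_ u) /forallP /(_ v) /eqP]. Qed.

Definition sigma g w := last false (Defs.act g (rcons w false)).

Lemma G_rcons0 g u b : g \in G d -> size u < d ->
  exists b', Defs.act g (rcons u b) = rcons (Defs.act g u) b'.
Proof.
move=> Gg Hu.
have Hu' : u \in words d by rewrite mem_words ltnW.
have Hv : rcons u b \in words d by rewrite mem_words size_rcons.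
have : child (vx u) (vx (rcons u b)).
  by apply/existsP; exists b; rewrite !val_vx.
rewrite -(Gchild _ _ Gg) => /existsP [b' /eqP Hb]; exists b'.
by rewrite !act_in.
Qed.

Lemma G_rcons g u b : g \in G d -> size u < d ->
  Defs.act g (rcons u b) = rcons (Defs.act g u) (b (+) sigma g u).
Proof.
move=> Gg Hu.
have [b0 H0] := G_rcons0 false Gg Hu.
have -> : sigma g u = b0 by rewrite /sigma H0 last_rcons.
case: b => //.
have [b1 H1] := G_rcons0 true Gg Hu.
rewrite H1; congr rcons.
case: b0 H0 b1 H1 => [] H0 [] H1 //.
  by move: (act_inj (etrans H1 (esym H0))) => /eqP; rewrite eqseq_rcons andbF.
by move: (act_inj (etrans H1 (esym H0))) => /eqP; rewrite eqseq_rcons andbF.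
Qed.

Lemma size_act g x : g \in G d -> size (Defs.act g x) = size x.
Proof.
move=> Gg; elim/last_ind: x => [|u b IH]; first by rewrite G1.
case: (boolP (rcons u b \in words d)) => H; last by rewrite act_out.
by rewrite G_rcons // ?size_rcons ?IH // -(size_rcons u b) -mem_words.
Qed.

Lemma take_act g x k : g \in G d -> x \in words d ->
  take k (Defs.act g x) = Defs.act g (take k x).
Proof.
move=> Gg; elim/last_ind: x => [|u b IH] Hx; first by rewrite G1.
have Hu : size u < d by rewrite -(size_rcons u b) -mem_words.
rewrite G_rcons // -!cats1 !take_cat size_act //.
case: ltnP => Hk; first by rewrite IH // mem_words ltnW.
case: (k - size u) => [|j] /=; rewrite ?cats0 ?cats1 -?G_rcons //.
Qed.

End Perm.


Lemma alpha_sigma d (g : {perm vert d}) w : g \in G d -> size w < d ->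
  alpha_w w g = sigma g w.
Proof.
move=> Gg Hw; rewrite /alpha_w /alpha /section cats1 G_rcons // -cats1.
by rewrite -(size_act w Gg) drop_size_cat //; case: (sigma g w).
Qed.

Section M.
Variable n : nat.
Local Notation d := n.+1.
Implicit Types g h v : {perm vert d}.

Definition Pm (f : seq bool -> bool) u := (size u == n) && f u.

Lemma phi_small f x : size x <= n -> phi (Pm f) x = x.
Proof.
elim/last_ind: x => [|u b IH] //; rewrite size_rcons => Hu.
rewrite phi_rcons IH; last exact: ltnW.
by rewrite /Pm (ltn_eqF Hu) addbF.
Qed.

Lemma phi_leaf f w b : size w = n -> phi (Pm f) (rcons w b) = rcons w (b (+) f w).
Proof. by move=> Hw; rewrite phi_rcons phi_small ?Hw // /Pm Hw eqxx. Qed.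

Lemma Pm_inv f u : Pm f (phi (Pm f) u) = Pm f u.
Proof.
rewrite /Pm size_phi; case: eqP => // Hu.
by rewrite phi_small ?Hu.
Qed.

Definition mm f : {perm vert d} := @pm d _ (Pm_inv f).

Lemma mm_val f x : val (mm f x) = phi (Pm f) (val x).
Proof. exact: pm_val. Qed.

Lemma vert_cases (s : seq bool) : size s <= n.+1 ->
  size s <= n \/ exists w b, s = rcons w b /\ size w = n.
Proof.
case: (lastP s) => [|w b]; first by left.
rewrite size_rcons ltnS leq_eqVlt => /orP[/eqP Hw|Hw]; last by left.
by right; exists w, b.
Qed.

Lemma mm_eq f f' : (forall w, size w = n -> f w = f' w) -> mm f = mm f'.
Proof.
move=> Hff; apply/permP => x; apply/val_inj; rewrite !mm_val.
have := valP x; rewrite mem_words => /vert_cases [Hs|[w [b [-> Hw]]]].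
  by rewrite !phi_small.
by rewrite !phi_leaf // Hff.
Qed.

Lemma mmM f f' : (mm f * mm f')%g = mm (fun w => f w (+) f' w).
Proof.
apply/permP => x; apply/val_inj; rewrite permM !mm_val.
have := valP x; rewrite mem_words => /vert_cases [Hs|[w [b [-> Hw]]]].
  by rewrite !phi_small.
by rewrite !phi_leaf // addbA.
Qed.

Lemma mm0 : mm (fun _ => false) = 1%g.
Proof.
apply/permP => x; apply/val_inj; rewrite perm1 !mm_val.
have := valP x; rewrite mem_words => /vert_cases [Hs|[w [b [-> Hw]]]].
  by rewrite !phi_small.
by rewrite !phi_leaf // addbF.
Qed.

Lemma mm_inv f : ((mm f)^-1)%g = mm f.
Proof.
apply: (mulgI (mm f)); rewrite mulgV mmM -mm0; apply: mm_eq => w _.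
by rewrite addbb.
Qed.

Lemma mm_G f : mm f \in G d.
Proof. exact: pm_in_G. Qed.

Lemma mm_Vlev f : mm f \in Vlev d.
Proof.
rewrite inE mm_G /=; apply/forallP => w; apply/implyP => /eqP Hw.
by apply/eqP/val_inj; rewrite mm_val phi_small ?Hw.
Qed.

Lemma alpha_mm f w : size w = n -> alpha_w w (mm f) = f w.
Proof.
move=> Hw; rewrite alpha_sigma ?mm_G ?Hw // /sigma act_pm ?phi_leaf //.
  by rewrite last_rcons.
by rewrite mem_words size_rcons Hw.
Qed.

Definition par (S : seq (seq bool)) (f : seq bool -> bool) := \big[addb/false]_(w <- S) f w.

Lemma alphaS_mm S f : all (fun w => size w == n) S -> alpha_S S (mm f) = par S f.
Proof.
move=> /allP HS; apply: eq_big_seq => w /HS /eqP Hw.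
exact: alpha_mm.
Qed.

Lemma Vlev_fix v w : v \in Vlev d -> size w = n -> Defs.act v w = w.
Proof.
rewrite inE => /andP[_ /forallP Hv] Hw.
have Hww : w \in words d by rewrite mem_words Hw.
move: (Hv (vx d w)); rewrite val_vx // Hw eqxx /= => /eqP H.
by rewrite act_in // H val_vx.
Qed.

Lemma Vlev_G v : v \in Vlev d -> v \in G d.
Proof. by rewrite inE => /andP[]. Qed.

Lemma Vlev_mm v : v \in Vlev d -> v = mm (fun w => alpha_w w v).
Proof.
move=> Vv; have Gv := Vlev_G Vv.
apply/permP => x; apply/val_inj; rewrite mm_val -act_val.
have := valP x; rewrite mem_words => /vert_cases [Hs|[w [b [-> Hw]]]].
  rewrite phi_small //.
  set t := val x ++ nseq (n - size (val x)) false.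
  have Ht : size t = n by rewrite size_cat size_nseq subnKC.
  have tw : t \in words d by rewrite mem_words Ht.
  have := take_act (size (val x)) Gv tw.
  by rewrite Vlev_fix // take_size_cat.
rewrite phi_leaf // G_rcons ?Hw // Vlev_fix // alpha_sigma ?Hw //.
Qed.

Lemma conj_mm g f : g \in G d -> (g^-1 * mm f * g)%g = mm (fun w => f (Defs.act (g^-1)%g w)).
Proof.
move=> Gg; have Gg' : (g^-1)%g \in G d by rewrite groupV.
apply/permP => x; apply/val_inj; rewrite !permM -act_val mm_val mm_val -act_val.
have := valP x; rewrite mem_words => /vert_cases [Hs|[w [b [-> Hw]]]].
  have Hs' : size (Defs.act (g^-1)%g (val x)) <= n by rewrite size_act.
  by rewrite (phi_small _ Hs') actKV (phi_small _ Hs).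
have Hw' : size w < d by rewrite Hw.
rewrite (phi_leaf _ _ Hw) (G_rcons _ Gg' Hw').
have Hw2 : size (Defs.act (g^-1)%g w) = n by rewrite size_act.
have Hw3 : size (Defs.act (g^-1)%g w) < d by rewrite Hw2.
rewrite (phi_leaf _ _ Hw2) (G_rcons _ Gg Hw3) actKV.
have := actKV g (rcons w b); rewrite (G_rcons _ Gg' Hw') (G_rcons _ Gg Hw3) actKV.
move/eqP; rewrite eqseq_rcons eqxx /= => /eqP.
by move=> H; congr (rcons w _); move: H; rewrite /addb; case: b; case: (sigma _ w); case: (sigma _ (Defs.act _ w));
  case: (f _).
Qed.

Lemma commg_mm g f : g \in G d ->
  [~ g, mm f]%g = mm (fun w => f (Defs.act (g^-1)%g w) (+) f w).
Proof.
by move=> Gg; rewrite commgEl conjgE !mulgA mm_inv (conj_mm _ Gg) mmM.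
Qed.

End M.


Lemma big_andr (s : seq (seq bool)) f c :
  \big[addb/false]_(x <- s) (f x && c) = c && par s f.
Proof.
by case: c; elim: s => [|x s IH]; rewrite ?big_nil /par ?big_nil // ?big_cons -/(par s f) ?IH ?andbT ?andbF.
Qed.

Lemma par0 s : par s (fun _ => false) = false.
Proof. by elim: s => [|x s IH]; rewrite /par ?big_nil // big_cons. Qed.

Lemma parD s f f' : par s (fun w => f w (+) f' w) = par s f (+) par s f'.
Proof. by rewrite /par big_split. Qed.

Lemma par_delta s a : uniq s -> par s (fun w => w == a) = (a \in s).
Proof.
elim: s => [|x s IH] //=; first by rewrite /par big_nil.
move=> /andP[xs us]; rewrite /par big_cons -/(par s _) IH // in_cons eq_sym.
by case: eqVneq => [->|]; rewrite ?(negbTE xs).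
Qed.

Lemma par_perm s s' f : perm_eq s s' -> par s f = par s' f.
Proof. exact: perm_big. Qed.

Lemma head_act d (g : {perm vert d}) y : g \in G d -> y \in words d -> 0 < size y ->
  head false (Defs.act g y) = head false y (+) sigma g [::].
Proof.
move=> Gg yw; case: y yw => [|c t] // yw _.
have : take 1 (Defs.act g (c :: t)) = Defs.act g [:: c] by rewrite take_act // /= take0.
have d0 : 0 < d by move: yw; rewrite mem_words => H; apply: leq_trans H.
rewrite -[[:: c]]/(rcons [::] c) (G_rcons (u:=[::]) c Gg d0) (G1 Gg).
by case: (Defs.act g (c :: t)) => //= ? ? [->].
Qed.

Lemma perm_map_lev d (g : {perm vert d}) k : g \in G d ->
  perm_eq (map (Defs.act (g^-1)%g) (lev k)) (lev k).
Proof.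
move=> Gg; apply: uniq_perm; rewrite ?uniq_lev ?map_inj_uniq ?uniq_lev //; first exact: act_inj.
move=> y; rewrite -{1}(actK g y) (mem_map (@act_inj _ (g^-1)%g)) !mem_lev size_act //.
Qed.

Lemma perm_map_xlev d (g : {perm vert d}) b k : g \in G d -> k < d ->
  perm_eq (map (Defs.act (g^-1)%g) (xlev b k)) (xlev (b (+) sigma g [::]) k).
Proof.
move=> Gg kd; apply: uniq_perm; [rewrite map_inj_uniq ?uniq_xlev //; exact: act_inj | exact: uniq_xlev | ].
move=> y; rewrite -{1}(actK g y) (mem_map (@act_inj _ (g^-1)%g)) !mem_xlev size_act //.
case: eqP => //= Hy; rewrite head_act //; last by rewrite Hy.
  by case: b; case: (head false y); case: (sigma g [::]).
by rewrite mem_words Hy.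
Qed.


Section Main.
Variable n : nat.
Local Notation d := n.+1.
Implicit Types g v : {perm vert d}.

Definition F (r : seq bool -> seq bool) (s : seq (seq bool)) (f : seq bool -> bool) w :=
  ((w \in s) && f w) (+) \big[addb/false]_(x <- s) (f x && (r x == w)).

Lemma genF (K : {group {perm vert d}}) r :
  (forall x, size x = n -> mm n (fun w => (w == x) (+) (w == r x)) \in K) ->
  forall s f, uniq s -> all (fun w => size w == n) s -> mm n (F r s f) \in K.
Proof.
move=> base; elim => [|x s IH] f.
  move=> _ _; rewrite (@mm_eq n _ (fun _ => false)); first by rewrite mm0 group1.
  by move=> w _; rewrite /F big_nil.
move=> /andP[xs us] /andP[/eqP xn sn].
rewrite (@mm_eq n _ (fun w => (f x && ((w == x) (+) (w == r x))) (+) F r s f w)); last first.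
  move=> w _; rewrite /F big_cons in_cons [r x == w]eq_sym.
  set B := \big[addb/false]_(y <- s) _.
  case: (eqVneq w x) => [->|wx]; first by rewrite (negbTE xs) /=; case: (f x); case: B; case: (x == r x).
  by rewrite /=; case: (f x); case: B; case: (w == r x); case: ((w \in s) && f w).
rewrite -mmM; apply: groupM; last exact: IH.
case: (f x); first exact: base.
by rewrite (@mm_eq n _ (fun _ => false)) ?mm0 ?group1.
Qed.

Definition T1 := [set v in Vlev d | alpha_S (lev n) v == false].
Definition T2 := [set v in Vlev d | (alpha_S (xlev false n.-1) v == false)
                             && (alpha_S (xlev true n.-1) v == false)].

Lemma all_lev : all (fun w => size w == n) (lev n).
Proof. by apply/allP => w; rewrite mem_lev. Qed.

Lemma all_xlev b : 0 < n -> all (fun w => size w == n) (xlev b n.-1).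
Proof. by move=> n0; apply/allP => w; rewrite mem_xlev prednK // => /andP[]. Qed.

Lemma inT1 f : (mm n f \in T1) = (par (lev n) f == false).
Proof. by rewrite inE mm_Vlev alphaS_mm // all_lev. Qed.

Lemma inT2 f : 0 < n -> (mm n f \in T2) =
   (par (xlev false n.-1) f == false) && (par (xlev true n.-1) f == false).
Proof. by move=> n0; rewrite inE mm_Vlev !alphaS_mm // all_xlev. Qed.

Lemma T1_gs : group_set T1.
Proof.
apply/group_setP; split; first by rewrite -mm0 inT1 par0.
move=> x y Tx Ty.
have Vx : x \in Vlev d by move: Tx; rewrite inE => /andP[].
have Vy : y \in Vlev d by move: Ty; rewrite inE => /andP[].
move: Tx Ty; rewrite (Vlev_mm Vx) (Vlev_mm Vy) mmM !inT1 parD.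
by move=> /eqP -> /eqP ->.
Qed.

Lemma T2_gs : 0 < n -> group_set T2.
Proof.
move=> n0; apply/group_setP; split; first by rewrite -mm0 inT2 // !par0.
move=> x y Tx Ty.
have Vx : x \in Vlev d by move: Tx; rewrite inE => /andP[].
have Vy : y \in Vlev d by move: Ty; rewrite inE => /andP[].
move: Tx Ty; rewrite (Vlev_mm Vx) (Vlev_mm Vy) mmM !inT2 // !parD.
by move=> /andP[/eqP -> /eqP ->] /andP[/eqP -> /eqP ->].
Qed.


Lemma perm_lev_n : 0 < n -> perm_eq (lev n) (xlev false n.-1 ++ xlev true n.-1).
Proof. by case: n => // m _; apply: perm_lev. Qed.

Definition Pt (c : seq bool) (u : seq bool) := nth false c (size u).
Lemma Pt_inv c u : Pt c (phi (Pt c) u) = Pt c u.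
Proof. by rewrite /Pt size_phi. Qed.
Definition tm c : {perm vert d} := @pm d _ (Pt_inv c).
Lemma tm_G c : tm c \in G d.
Proof. exact: pm_in_G. Qed.

Lemma act_tm c : size c = n -> Defs.act (tm c) (nseq n false) = c.
Proof.
move=> cn; rewrite act_pm; last by rewrite mem_words size_nseq.
apply: (@eq_from_nth _ false); first by rewrite size_phi size_nseq.
move=> i; rewrite size_phi size_nseq => lin.
rewrite nth_phi ?size_nseq // nth_nseq lin /Pt size_take size_nseq lin.
by [].
Qed.

Definition Ph (h : bool) (c : seq bool) (u : seq bool) :=
  if u is y :: _ then (y == h) && nth false c (size u) else false.
Lemma Ph_inv h c u : Ph h c (phi (Ph h c) u) = Ph h c u.
Proof. by case: u => [|y t] //=; rewrite addbF size_phi. Qed.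
Definition hm h c : {perm vert d} := @pm d _ (Ph_inv h c).
Lemma hm_G h c : hm h c \in G d.
Proof. exact: pm_in_G. Qed.

Lemma act_hm1 h y : size y = n.-1 -> 0 < n ->
  Defs.act (hm h (h :: y)) (h :: nseq n.-1 false) = h :: y.
Proof.
move=> yn n0; rewrite act_pm; last by rewrite mem_words /= size_nseq prednK // ltnW.
apply: (@eq_from_nth _ false); first by rewrite size_phi /= size_nseq yn.
move=> i; rewrite size_phi => lin; rewrite nth_phi //.
case: i lin => [|j] lin; first by rewrite /= addbF.
rewrite /= size_nseq ltnS in lin; rewrite /= nth_nseq lin eqxx /= size_take size_nseq lin.
by [].
Qed.

Lemma act_hm2 h y : 0 < n ->
  Defs.act (hm h (h :: y)) (~~ h :: nseq n.-1 false) = ~~ h :: nseq n.-1 false.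
Proof.
move=> n0; rewrite act_pm; last by rewrite mem_words /= size_nseq prednK // ltnW.
apply: (@eq_from_nth _ false); first by rewrite size_phi.
move=> i; rewrite size_phi => lin; rewrite nth_phi //.
case: i lin => [|j] lin; first by rewrite /= addbF.
by move: lin; rewrite /=; case: h => _; rewrite addbF.
Qed.

Lemma part1_sub : [~: G d, Vlev d]%g \subset T1.
Proof.
suff: [~: G d, Vlev d]%g \subset Group T1_gs by [].
rewrite /commutator gen_subG; apply/subsetP => _ /imset2P [g v Gg Vv ->].
rewrite /= (Vlev_mm Vv) commg_mm // inT1 parD.
set f := fun w => alpha_w w v.
have -> : par (lev n) (fun w => f (Defs.act (g^-1)%g w)) = par (lev n) f.
  by rewrite /par -(big_map (Defs.act (g^-1)%g) predT f); apply: par_perm; apply: perm_map_lev.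
by rewrite addbb.
Qed.

Lemma part1_sup : T1 \subset [~: G d, Vlev d]%g.
Proof.
apply/subsetP => v Tv.
have Vv : v \in Vlev d by move: Tv; rewrite inE => /andP[].
move: Tv; rewrite (Vlev_mm Vv); set f := fun w => alpha_w w v.
rewrite inT1 => /eqP pf.
rewrite (@mm_eq n f (F (fun _ => nseq n false) (lev n) f)); last first.
  by move=> w wn; rewrite /F mem_lev wn eqxx /= big_andr pf andbF addbF.
apply: genF; [| exact: uniq_lev | exact: all_lev].
move=> x xn.
have -> : mm n (fun w => (w == x) (+) (w == nseq n false)) =
          [~ tm x, mm n (fun w => w == nseq n false)]%g.
  by rewrite commg_mm ?tm_G //; apply: mm_eq => w _; rewrite act_eq act_tm.
exact: mem_commg (tm_G x) (mm_Vlev _ _).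
Qed.

Lemma part2_sub : 0 < n -> [~: G d, T1]%g \subset T2.
Proof.
move=> n0; suff: [~: G d, T1]%g \subset Group (T2_gs n0) by [].
rewrite /commutator gen_subG; apply/subsetP => _ /imset2P [g v Gg Tv ->].
have Vv : v \in Vlev d by move: Tv; rewrite inE => /andP[].
move: Tv; rewrite /= (Vlev_mm Vv); set f := fun w => alpha_w w v.
rewrite inT1 => /eqP pf.
rewrite commg_mm // inT2 // !parD.
have key b : par (xlev b n.-1) (fun w => f (Defs.act (g^-1)%g w)) =
             par (xlev (b (+) sigma g [::]) n.-1) f.
  rewrite /par -(big_map (Defs.act (g^-1)%g) predT f); apply: par_perm.
  by apply: perm_map_xlev => //; rewrite prednK // ltnW.
have split : par (xlev false n.-1) f = par (xlev true n.-1) f.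
  move: pf; rewrite (par_perm _ (perm_lev_n n0)) /par big_cat /=.
  by case: (\big[addb/false]_(i <- xlev false n.-1) f i); case: (\big[addb/false]_(i <- xlev true n.-1) f i).
rewrite !key; case: (sigma g [::]) => /=; rewrite split addbb //.
Qed.

Lemma part2_sup : 0 < n -> T2 \subset [~: G d, T1]%g.
Proof.
move=> n0; apply/subsetP => v Tv.
have Vv : v \in Vlev d by move: Tv; rewrite inE => /andP[].
move: Tv; rewrite (Vlev_mm Vv); set f := fun w => alpha_w w v.
rewrite inT2 // => /andP[/eqP pf0 /eqP pf1].
pose r := fun x : seq bool => head false x :: nseq n.-1 false.
rewrite (@mm_eq n f (F r (lev n) f)); last first.
  move=> w wn; rewrite /F mem_lev wn eqxx /= (perm_big _ (perm_lev_n n0)) big_cat /=.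
  have hb b : \big[addb/false]_(x <- xlev b n.-1) (f x && (r x == w)) = false.
    rewrite (@eq_big_seq _ _ _ _ _ _ (fun x => f x && ((b :: nseq n.-1 false) == w))).
      by rewrite big_andr; case: b; rewrite ?pf0 ?pf1 andbF.
    by move=> x; rewrite mem_xlev => /andP[_ /eqP hx]; rewrite /r hx.
  by rewrite !hb /= addbF.
apply: genF; [| exact: uniq_lev | exact: all_lev].
move=> [|h y]; first by move=> n00; rewrite -n00 in n0.
move=> yn0; have yn : size y = n.-1 by rewrite -yn0.
rewrite /r /=.
have -> : mm n (fun w => (w == h :: y) (+) (w == h :: nseq n.-1 false)) =
   [~ hm h (h :: y), mm n (fun w => (w == h :: nseq n.-1 false) (+) (w == ~~ h :: nseq n.-1 false))]%g.
  rewrite commg_mm ?hm_G //; apply: mm_eq => w _; rewrite !act_eq act_hm1 ?act_hm2 //.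
  by case: (w == h :: y); case: (w == ~~ h :: _); case: (w == h :: _).
apply: mem_commg; first exact: hm_G.
by rewrite inT1 parD !par_delta ?uniq_lev // !mem_lev /= size_nseq prednK // eqxx.
Qed.

End Main.

Theorem main_aux (d : nat) (hd : 2 <= d) :
  Vder d 1 = [set v in Vlev d | alpha_S (lev d.-1) v == false] /\
  Vder d 2 = [set v in Vlev d | (alpha_S (xlev false (d - 2)) v == false)
                             && (alpha_S (xlev true (d - 2)) v == false)].
Proof.
case: d hd => [|n] // hn.
have n0 : 0 < n by [].
have E1 : Vder n.+1 1 = T1 n.
  by apply/eqP; rewrite eqEsubset part1_sub part1_sup.
split; first exact: E1.
have -> : n.+1 - 2 = n.-1 by rewrite subSS subn1.
have -> : Vder n.+1 2 = [~: G n.+1, Vder n.+1 1]%g by [].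
rewrite E1; apply/eqP; rewrite eqEsubset part2_sub // part2_sup //.
Qed.


Theorem mainTheorem14 (d : nat) (hd : 2 <= d) :
  Vder d 1 = [set v in Vlev d | alpha_S (lev d.-1) v == false] /\
  Vder d 2 = [set v in Vlev d | (alpha_S (xlev false (d - 2)) v == false)
                             && (alpha_S (xlev true (d - 2)) v == false)].
Proof. exact: main_aux. Qed.
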